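(* Let $f\in\{0,1\}^n$ have a $2$-tilde-error overlap of shift $r$ with error positions $i<j$ and operations $O_i,O_j$. Then the word $\tilde\alpha_r(f)=\mathrm{pre}_r(f)\,O_i(f)$ is $f$-free.
   Context: Words are over $\{0,1\}$. For $w$ of length $n$: $w[k]$ is its $k$-th symbol, $\mathrm{pre}_l(w)=w[1..l]$ and $\mathrm{suf}_l(w)=w[n-l+1..n]$. A word is $f$-free if it does not contain $f$ as a factor. Operations: the replacement $R_i$ flips the symbol at position $i$. The swap $S_i$ is defined when $w[i]\ne w[i+1]$ and exchanges these two symbols. $\mathrm{dist}_\sim(u,v)$ is the minimum number of replacements and swaps transforming $u$ into the equal-length word $v$. A tilde-transformation is minimal if it uses exactly $\mathrm{dist}_\sim$ operations and modifies each position at most once. $f$ has a $2$-tilde-error overlap of length $l=n-r$ (with $1\le l\le n-1$; $r$ is the shift) if $\mathrm{dist}_\sim(\mathrm{pre}_l(f),\mathrm{suf}_l(f))=2$. In that case fix a minimal tilde-transformation from $\mathrm{pre}_l(f)$ to $\mathrm{suf}_l(f)$. It consists of two operations $O_i\in\{R_i,S_i\}$ and $O_j\in\{R_j,S_j\}$ acting at positions $i<j$ (the error positions). Since positions $1..l$ of $\mathrm{pre}_l(f)$ are positions of $f$, the words $O_i(f)$ and $O_j(f)$ are defined by applying the same operations to $f$. The overlap has type RR, SR, RS or SS according to whether $(O_i,O_j)$ is (replacement, replacement), (swap, replacement), (replacement, swap) or (swap, swap). *)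

(* Defs.v *)
(* Binary words are [seq bool]; positions are 0-indexed
   internally (paper position k corresponds to index k-1). *)
From mathcomp Require Import all_boot.
Set Implicit Arguments. Unset Strict Implicit. Unset Printing Implicit Defensive.

Inductive op := Rep of nat | Swp of nat.

Definition op_pos (o : op) : nat := match o with Rep i => i | Swp i => i end.

Definition op_support (o : op) : seq nat :=
  match o with Rep i => [:: i] | Swp i => [:: i; i.+1] end.

Definition apply_op (o : op) (w : seq bool) : option (seq bool) :=
  match o with
  | Rep i => if i < size w then Some (set_nth false w i (~~ nth false w i)) else None
  | Swp i =>
      if (i.+1 < size w) && (nth false w i != nth false w i.+1)
      then Some (set_nth false (set_nth false w i (nth false w i.+1)) i.+1 (nth false w i))
      else None
  end.

Fixpoint apply_ops (os : seq op) (w : seq bool) : option (seq bool) :=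
  match os with
  | [::] => Some w
  | o :: os' => obind (apply_ops os') (apply_op o w)
  end.

Definition transforms (os : seq op) (u v : seq bool) : Prop := apply_ops os u = Some v.

Definition tdist (u v : seq bool) (d : nat) : Prop :=
  size u = size v /\
  (exists os, size os = d /\ transforms os u v) /\
  (forall os, transforms os u v -> d <= size os).

Definition minimal_tt (os : seq op) (u v : seq bool) : Prop :=
  transforms os u v /\ tdist u v (size os) /\ uniq (flatten (map op_support os)).

Definition pre (l : nat) (w : seq bool) := take l w.
Definition suf (l : nat) (w : seq bool) := drop (size w - l) w.

Definition ffree (f w : seq bool) : bool := ~~ infix f w.

Definition two_tilde_overlap (f : seq bool) (r : nat) : Prop :=
  let l := size f - r in
  1 <= l <= size f - 1 /\ r <= size f /\ tdist (pre l f) (suf l f) 2.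

(* Main.v *)
Require Import Defs.
From mathcomp Require Import all_boot.
From mathcomp Require Import zify.

Definition ok o (w : seq bool) := match o with
  Rep i => i < size w
| Swp i => (i.+1 < size w) && (nth false w i != nth false w i.+1) end.
Definition xo o (w : seq bool) :=
  mkseq (fun k => nth false w k (+) (k \in op_support o)) (size w).

Lemma apply_opE o w : apply_op o w = if ok o w then Some (xo o w) else None.
Proof.
case: o => i /=; case: ifP => // h; congr Some;
  apply: (@eq_from_nth _ false).
- by rewrite size_set_nth size_mkseq; apply/maxn_idPr.
- move=> k; rewrite size_set_nth (maxn_idPr h) => hk.
  rewrite nth_set_nth nth_mkseq //= inE.
  by case: eqP => [->|]; rewrite ?addbT ?addbF.
- case/andP: h => h1 _.
  rewrite !size_set_nth size_mkseq; lia.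
- case/andP: h => h1 h2.
  have hs : size (set_nth false (set_nth false w i (nth false w i.+1)) i.+1 (nth false w i)) = size w.
    rewrite !size_set_nth; lia.
  move=> k; rewrite hs => hk.
  rewrite nth_mkseq // !inE !nth_set_nth /=.
  have [->|ne1] := eqVneq k i.+1.
    have -> : (i.+1 == i) = false by lia.
    by rewrite ?eqxx ?orbT ?addbT; move: h2; case: (nth false w i); case: (nth false w i.+1).
  rewrite orbF nth_set_nth /=.
  have [->|ne2] := eqVneq k i; last by rewrite addbF.
  by rewrite addbT; move: h2; case: (nth false w i); case: (nth false w i.+1).
Qed.

Lemma ok_supp o w k : ok o w -> k \in op_support o -> k < size w.
Proof.
case: o => i /=; rewrite !inE.
- by move=> h /eqP->.
- by case/andP => h _ /orP[] /eqP->; lia.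
Qed.

Lemma nth_xo o w k : k < size w -> nth false (xo o w) k = nth false w k (+) (k \in op_support o).
Proof. by move=> hk; rewrite nth_mkseq. Qed.

Lemma size_xo o w : size (xo o w) = size w.
Proof. by rewrite size_mkseq. Qed.

Lemma ok_transfer o w w' : ok o w -> size w <= size w' ->
  (forall k, k \in op_support o -> nth false w' k = nth false w k) -> ok o w'.
Proof.
case: o => i /= h hs he.
- lia.
- case/andP: h => h1 h2; apply/andP; split; first lia.
  by rewrite !he // !inE eqxx ?orbT.
Qed.

Lemma two_ops o1 o2 u v : apply_ops [:: o1; o2] u = Some v ->
  [/\ ok o1 u, ok o2 (xo o1 u), size v = size u &
   forall k, k < size u -> nth false v k =
     nth false u k (+) (k \in op_support o1) (+) (k \in op_support o2)].
Proof.
rewrite /= apply_opE; case h1: (ok o1 u) => //=.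
rewrite apply_opE; case h2: (ok o2 (xo o1 u)) => //= -[<-].
split => //; first by rewrite !size_xo.
by move=> k hk; rewrite nth_xo ?size_xo // nth_xo.
Qed.

Lemma pos_supp o : op_pos o \in op_support o.
Proof. by case: o => i; rewrite /= inE eqxx. Qed.

Lemma supp_ge1 o k : k \in op_support o -> op_pos o <= k.
Proof. case: o => i /=; rewrite ?inE; first by move/eqP->. by case/orP => /eqP->. Qed.

Lemma disj_lt Oi Oj : uniq (op_support Oi ++ op_support Oj) ->
  op_pos Oi < op_pos Oj -> forall k, k \in op_support Oi -> k < op_pos Oj.
Proof.
move=> hu hij k hk; rewrite cat_uniq in hu; case/and3P: hu => _ hn _.
have hj := pos_supp Oj.
have hjn : op_pos Oj \notin op_support Oi.
  by apply/negP => hin; move/hasPn: hn => /(_ _ hj); rewrite hin.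
clear hn; move: hk hjn; case: Oi hij => i /= hij; rewrite !inE; first by move/eqP->.
case/orP => /eqP-> hjn; move: hjn; rewrite negb_or => /andP[hh1 hh2]; lia.
Qed.

Theorem lemma3 (f : seq bool) (r : nat) (os : seq op) (Oi Oj : op) :
  two_tilde_overlap f r ->
  minimal_tt os (pre (size f - r) f) (suf (size f - r) f) ->
  (os = [:: Oi; Oj] \/ os = [:: Oj; Oi]) ->
  op_pos Oi < op_pos Oj ->
  exists w, apply_op Oi f = Some w /\ ffree f (pre r f ++ w).
Proof.
move=> [hl [hr _]] [htr [_ hu]] hos hij.
set n := size f in hl hr htr hu *.
set l := n - r in hl htr hu *.
have hsu : size (pre l f) = l by rewrite /pre size_takel // /l leq_subr.
have hnl : n - l = r by rewrite /l; lia.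
have hv : forall t, t < l -> nth false (suf l f) t = nth false f (r + t).
  by move=> t _; rewrite /suf nth_drop -/n hnl.
have hpu : forall t, t < l -> nth false (pre l f) t = nth false f t.
  by move=> t ht; rewrite /pre nth_take.
have hu2 : uniq (op_support Oi ++ op_support Oj).
  case: hos hu => -> /=; rewrite cats0 // uniq_catC //.
have hci := @disj_lt Oi Oj hu2 hij.
set j := op_pos Oj in hij hci *.
have hcj : forall k, k \in op_support Oj -> j <= k by move=> k; apply: supp_ge1.
have hjj : j \in op_support Oj by apply: pos_supp.
have [hjl hV hokf] : [/\ j < l,
   (forall t, t < l -> nth false f (r + t) =
     nth false f t (+) (t \in op_support Oi) (+) (t \in op_support Oj)) &
   ok Oi f].
  case: hos htr => -> htr; case/two_ops: htr => ok1 ok2 _ hk.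
  - split.
    + by rewrite -hsu -(size_xo Oi); apply: ok_supp _ _ _ ok2 hjj.
    + by move=> t ht; rewrite -hv // hk ?hsu // hpu.
    + apply: (ok_transfer _ _ _ ok1) => [|k hk']; first by rewrite hsu /l leq_subr.
      rewrite hpu //; rewrite -hsu; exact: ok_supp _ _ _ ok1 hk'.
  - split.
    + by rewrite -hsu; apply: ok_supp _ _ _ ok1 hjj.
    + by move=> t ht; rewrite -hv // hk ?hsu // hpu // addbAC.
    + apply: (ok_transfer _ _ _ ok2) => [|k hk']; first by rewrite size_xo hsu /l leq_subr.
      have hkl : k < l by rewrite -hsu -(size_xo Oj); exact: ok_supp _ _ _ ok2 hk'.
      rewrite nth_xo ?hsu // hpu //.
      have -> : (k \in op_support Oj) = false.
        by apply/negP => /hcj; have := hci _ hk'; lia.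
      by rewrite addbF.
exists (xo Oi f); split; first by rewrite apply_opE hokf.
rewrite /ffree; apply/negP => /infixP [s [s' ha]].
set p := size s.
have hsz := congr1 size ha.
rewrite !size_cat size_xo /pre size_takel // -/n in hsz.
have hpr : p <= r by rewrite /p; lia.
have hO : forall t, t < n -> nth false f t =
    if p + t < r then nth false f (p + t)
    else nth false f (p + t - r) (+) ((p + t - r) \in op_support Oi).
  move=> t ht.
  have : nth false (pre r f ++ xo Oi f) (p + t) = nth false f t.
    by rewrite ha nth_cat ltnNge leq_addr /= addKn nth_cat ht.
  rewrite nth_cat /pre size_takel // => <-.
  case: ifP => h; first by rewrite nth_take.
  rewrite nth_xo //; lia.
have hcif : forall k, j <= k -> (k \in op_support Oi) = false.
  by move=> k hk; apply/negP => /hci; lia.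
have hcjf : forall k, k < j -> (k \in op_support Oj) = false.
  by move=> k hk; apply/negP => /hcj; lia.
have [hpe|hpr'] := eqVneq p r.
  have hii : op_pos Oi \in op_support Oi by apply: pos_supp.
  have := hO (op_pos Oi) ltac:(lia).
  rewrite hpe ltnNge leq_addr /= addKn hii.
  by case: (nth false f (op_pos Oi)).
have E1 := hV j hjl; rewrite hcif // hjj in E1.
have E2 := hO (j + r) ltac:(lia).
rewrite ifF in E2; last by lia.
rewrite (_ : p + (j + r) - r = p + j) in E2; last by lia.
rewrite hcif ?addbF in E2; last by lia.
have E3 := hO j ltac:(lia).
rewrite addnC in E2.
case: ifP E3 => hc E3.
  by move: E1 E2 E3; case: (nth false f j); case: (nth false f (p + j)); case: (nth false f (r + j)).
have E4 := hV (p + j - r) ltac:(lia).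
rewrite hcjf ?addbF in E4; last by lia.
rewrite (_ : r + (p + j - r) = p + j) in E4; last by lia.
move: E1 E2 E3 E4.
case: (nth false f j); case: (nth false f (p + j)); case: (nth false f (r + j));
  case: (nth false f (p + j - r)); case: (p + j - r \in op_support Oi) => //.
Qed.
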